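(* Let $G$ be a finite simple unmixed graph. Then the set $F$ of column vectors of the linear syzygy matrix $\mathcal{LS}(I_c(G))$ is a minimal system of generators of the $S$-submodule $S(F)\subseteq S^r$ generated by $F$ if and only if the graph $\mathcal{G}_{I_c(G)}$ has no strong $3$-cycles.
   Context: $G$ has vertices $t_1,\ldots,t_s$, $S=K[t_1,\ldots,t_s]$ with $K$ a field. $G$ is unmixed if all minimal vertex covers (inclusion-minimal sets of vertices meeting every edge) have equal size. Let $C_1,\ldots,C_r$ be the minimal vertex covers; $I_c(G)$ is generated by $u_i=\prod_{t_j\in C_i}t_j$. The graph $\mathcal{G}_{I_c(G)}$ has vertex set $\{C_1,\ldots,C_r\}$, with $\{C_i,C_j\}$ an edge iff $|C_i\cup C_j|=|C_i|+1$. For each edge $\{C_i,C_j\}$ with $i<j$ one has $C_j=(C_i\setminus\{t_{k'}\})\cup\{t_k\}$ for some vertices $t_k,t_{k'}$, and the corresponding column of $\mathcal{LS}(I_c(G))$ is $t_ke'_i-t_{k'}e'_j$, where $e'_1,\ldots,e'_r$ is the standard basis of $S^r$ (so $F$ consists of these vectors). A $3$-cycle $\{C_1,C_2,C_3,C_1\}$ of $\mathcal{G}_{I_c(G)}$ is strong if $C_2\setminus C_1=C_3\setminus C_1$. *)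

(* Defs.v *)
From HB Require Import structures.
From mathcomp Require Import all_boot all_algebra.
From mathcomp Require Import multinomials.mpoly.

Set Implicit Arguments.
Unset Strict Implicit.
Unset Printing Implicit Defensive.

Import GRing.Theory.
Local Open Scope ring_scope.

Definition simple_graph (s : nat) (e : rel 'I_s) : Prop :=
  (forall x y, e x y = e y x) /\ (forall x, e x x = false).

Definition vertex_cover (s : nat) (e : rel 'I_s) (C : {set 'I_s}) : Prop :=
  forall x y, e x y -> (x \in C) || (y \in C).

Definition minimal_vertex_cover (s : nat) (e : rel 'I_s) (C : {set 'I_s}) : Prop :=
  vertex_cover e C /\ forall D : {set 'I_s}, D \proper C -> ~ vertex_cover e D.

Definition unmixed (s : nat) (e : rel 'I_s) : Prop :=
  forall C D, minimal_vertex_cover e C -> minimal_vertex_cover e D -> #|C| = #|D|.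

Definition enum_min_covers (s : nat) (e : rel 'I_s) (r : nat)
  (C : 'I_r -> {set 'I_s}) : Prop :=
  injective C /\
  forall D : {set 'I_s}, minimal_vertex_cover e D <-> exists i, C i = D.

(* Edges of the graph G_{I_c(G)}: {C_i, C_j} with |C_i u C_j| = |C_i| + 1 *)
Definition cover_adj (s r : nat) (C : 'I_r -> {set 'I_s}) (i j : 'I_r) : bool :=
  #|C i :|: C j| == (#|C i| + 1)%N.

Definition has_strong_3cycle (s r : nat) (C : 'I_r -> {set 'I_s}) : Prop :=
  exists a b c : 'I_r,
    [/\ a != b, b != c, a != c,
        [&& cover_adj C a b, cover_adj C b c & cover_adj C c a]
      & C b :\: C a = C c :\: C a].

(* Elements of S^r, represented as functions 'I_r -> S (coordinates with
   respect to the standard basis e'_1, ..., e'_r). *)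
Definition vecS (K : fieldType) (s r : nat) := 'I_r -> {mpoly K[s]}.

(* For an edge {C_i, C_j} (i < j) with C_j = (C_i \ {t_k'}) u {t_k}:
   the column  t_k e'_i - t_k' e'_j  of LS(I_c(G)).
   t_k is the unique element of C_j \ C_i and t_k' the unique element of
   C_i \ C_j. *)
Definition LS_column (K : fieldType) (s r : nat) (C : 'I_r -> {set 'I_s})
  (i j : 'I_r) : vecS K s r :=
  let tk  : {mpoly K[s]} := oapp (fun k => 'X_k) 0 [pick x in C j :\: C i] in
  let tk' : {mpoly K[s]} := oapp (fun k => 'X_k) 0 [pick x in C i :\: C j] in
  fun l => (if l == i then tk else 0) - (if l == j then tk' else 0).

Definition LS_columns (K : fieldType) (s r : nat) (C : 'I_r -> {set 'I_s})
  (v : vecS K s r) : Prop :=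
  exists i j : 'I_r, [/\ (i < j)%N, cover_adj C i j & v = LS_column K C i j].

Definition in_span (K : fieldType) (s r : nat) (P : vecS K s r -> Prop)
  (v : vecS K s r) : Prop :=
  exists (m : nat) (g : 'I_m -> vecS K s r) (c : 'I_m -> {mpoly K[s]}),
    (forall n, P (g n)) /\
    forall l : 'I_r, v l = \sum_(n < m) c n * g n l.

Definition minimal_generating_system (K : fieldType) (s r : nat)
  (P : vecS K s r -> Prop) : Prop :=
  forall f, P f -> ~ in_span (fun g => P g /\ g <> f) f.

(* Main.v *)
Require Import Defs.
From HB Require Import structures.
From mathcomp Require Import all_boot all_algebra.
From mathcomp Require Import multinomials.mpoly.
From mathcomp Require Import zify ring.

Set Implicit Arguments.
Unset Strict Implicit.
Unset Printing Implicit Defensive.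
Import GRing.Theory.
Lemma L1 (T : finType) (A B : {set T}) :
  #|A| = #|B| -> #|A :|: B| = (#|A| + 1)%N ->
  #|B :\: A| = 1%N /\ #|A :\: B| = 1%N.
Proof.
move=> Hs Hu; have := cardsUI A B; rewrite !cardsD Hu setIC => H; lia.
Qed.

Lemma L2 (T : finType) (A B D : {set T}) :
  #|A| = #|B| -> #|A| = #|D| ->
  #|A :|: B| = (#|A| + 1)%N -> B :\: A = D :\: A -> B != D ->
  #|B :|: D| = (#|B| + 1)%N.
Proof.
move=> HB HD HAB HBD nBD.
have sub : B :|: D \subset A :|: B.
  apply/subsetP => x; rewrite !inE => /orP [->|Dx]; first by rewrite orbT.
  case Ax: (x \in A) => //=.
  have : x \in D :\: A by rewrite inE Ax Dx.
  by rewrite -HBD inE => /andP [].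
have le1 := subset_leq_card sub.
have lt1 : (#|B| < #|B :|: D|)%N.
  rewrite ltnNge; apply/negP => Hle.
  have eqBU : B :|: D = B.
    apply/eqP; rewrite eq_sym eqEcard subsetUl Hle //.
  have DB : D \subset B by rewrite -eqBU subsetUr.
  move/negP: nBD; apply; rewrite eq_sym eqEcard DB -HB -HD leqnn //.
lia.
Qed.

Lemma L3 (T : finType) (A B D : {set T}) :
  #|A| = #|B| -> #|A| = #|D| ->
  #|A :|: B| = (#|A| + 1)%N -> #|B :|: D| = (#|B| + 1)%N ->
  B :\: A = D :\: A -> D :\: B = A :\: B.
Proof.
move=> HB HD HAB HBD E.
have [_ h1] := L1 HB HAB.
have HBD' : #|B| = #|D| by rewrite -HB.
have [h2 _] := L1 HBD' HBD.
apply/eqP; rewrite eqEcard h1 h2 leqnn andbT.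
apply/subsetP => x; rewrite !inE => /andP [nB Dx]; rewrite nB /=.
case Ax: (x \in A) => //.
have : x \in D :\: A by rewrite inE Ax Dx.
by rewrite -E inE (negbTE nB) andbF.
Qed.

Local Open Scope ring_scope.

Lemma pick_in (T : finType) (A : {set T}) k : [pick x in A] = Some k -> k \in A.
Proof. by case: pickP => // y Hy [<-]. Qed.

Lemma set1_of (T : finType) (A : {set T}) k : #|A| = 1%N -> k \in A -> A = [set k].
Proof.
move=> /eqP /cards1P [x ->]; rewrite inE => /eqP -> //.
Qed.

Lemma pick_some (T : finType) (A : {set T}) : #|A| = 1%N ->
  exists k, [pick x in A] = Some k /\ A = [set k].
Proof.
move=> /eqP /cards1P [x ->]; exists x; split => //.
by case: pickP => [y|/(_ x)]; rewrite inE ?eqxx // => /eqP ->.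
Qed.

Lemma coefX_nz (K : fieldType) (s : nat) (c : {mpoly K[s]}) (o : option 'I_s) (k : 'I_s) :
  (c * oapp (fun k => 'X_k) 0 o)@_U_(k) != 0 -> o = Some k.
Proof.
case: o => [y|] /=; last by rewrite mulr0 mcoeff0 eqxx.
case: (eqVneq y k) => [->//|nyk].
rewrite mcoeffM big1 ?eqxx // => -[k1 k2] /= /eqP Hk.
rewrite mcoeffX; case: eqVneq => [E|]; last by rewrite mulr0.
exfalso; have := congr1 (fun m : 'X_{1..s} => m y) Hk => /=; rewrite mnmDE -E !mnm1E; have -> : (y == y) = true by apply/eqP.
rewrite eq_sym (negbTE nyk); lia.
Qed.

Lemma col_anti (K : fieldType) s r (C : 'I_r -> {set 'I_s}) p q l :
  LS_column K C q p l = - LS_column K C p q l.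
Proof.
rewrite /LS_column; case: (l == p); case: (l == q);
  by rewrite ?subr0 ?sub0r ?opprK ?opprB ?oppr0.
Qed.

Lemma adj_sym s r (C : 'I_r -> {set 'I_s}) (Hsz : forall p q, #|C p| = #|C q|) p q :
  cover_adj C p q -> cover_adj C q p.
Proof. by rewrite /cover_adj setUC (Hsz p q). Qed.

Lemma adj_card s r (C : 'I_r -> {set 'I_s}) (Hsz : forall p q, #|C p| = #|C q|) p q :
  cover_adj C p q -> #|C q :\: C p| = 1%N /\ #|C p :\: C q| = 1%N.
Proof. by move=> /eqP H; apply: L1. Qed.

Lemma strong_of s r (C : 'I_r -> {set 'I_s}) (Hsz : forall p q, #|C p| = #|C q|)
  (Cinj : injective C) i j b :
  i != j -> j != b -> i != b -> cover_adj C i j -> cover_adj C i b ->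
  C j :\: C i = C b :\: C i -> has_strong_3cycle C.
Proof.
move=> nij njb nib aij aib E.
exists i, j, b; split => //; apply/and3P; split => //; last exact: adj_sym.
apply/eqP; apply: L2 (Hsz i j) (Hsz i b) (eqP aij) E _.
by apply/eqP => /Cinj /eqP; apply/negP.
Qed.

Lemma col_nz (K : fieldType) s r (C : 'I_r -> {set 'I_s})
  (Hsz : forall p q, #|C p| = #|C q|) p q :
  p != q -> cover_adj C p q -> LS_column K C p q p != 0.
Proof.
move=> npq apq; rewrite /LS_column eqxx (negbTE npq) subr0.
have [y [-> _]] := pick_some (adj_card Hsz apq).1 => /=.
apply/eqP => H; have := congr1 (mcoeff U_(y)) H.
by rewrite mcoeffXU eqxx mcoeff0 => /eqP; rewrite oner_eq0.
Qed.

Lemma in_F (K : fieldType) s r (C : 'I_r -> {set 'I_s})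
  (Hsz : forall p q, #|C p| = #|C q|) p q :
  p != q -> cover_adj C p q ->
  exists g (sg : {mpoly K[s]}), [/\ LS_columns C g, sg * sg = 1 &
     forall l, g l = sg * LS_column K C p q l].
Proof.
move=> npq apq; case: (ltngtP p q) => H.
- exists (LS_column K C p q), 1; split; rewrite ?mulr1 //.
    by exists p, q.
  by move=> l; rewrite mul1r.
- exists (LS_column K C q p), (-1); split; rewrite ?mulrNN ?mulr1 //.
    by exists q, p; split => //; apply: adj_sym.
  by move=> l; rewrite col_anti mulN1r.
- by move: npq; rewrite (val_inj H) eqxx.
Qed.

Theorem proposition4p10 (K : fieldType) (s : nat) (e : rel 'I_s)
  (r : nat) (C : 'I_r -> {set 'I_s}) :
  simple_graph e -> unmixed e -> enum_min_covers e C ->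
  (minimal_generating_system (LS_columns (K:=K) C) <-> ~ has_strong_3cycle C).
Proof.
move=> _ Hun [Cinj Hen].
have Hsz : forall p q, #|C p| = #|C q|.
  by move=> p q; apply: Hun; apply/Hen; [exists p | exists q].
split.
- move=> Hmin [a [b [c [nab nbc nac /and3P [ab bc ca] E]]]].
  have ac := adj_sym Hsz ca.
  have [g1 [s1 [F1 s11 H1]]] := in_F K Hsz nbc bc.
  have [g2 [s2 [F2 s22 H2]]] := in_F K Hsz nac ac.
  have [g3 [s3 [F3 s33 H3]]] := in_F K Hsz nab ab.
  have H2' l : LS_column K C a c l = s2 * g2 l by rewrite H2 mulrA s22 mul1r.
  have H3' l : LS_column K C a b l = s3 * g3 l by rewrite H3 mulrA s33 mul1r.
  have S1 : C c :\: C b = C a :\: C b.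
    by apply: L3 (Hsz a b) (Hsz a c) (eqP ab) (eqP bc) E.
  have S2 : C b :\: C c = C a :\: C c.
    by apply: L3 (Hsz a c) (Hsz a b) (eqP ac) (eqP (adj_sym Hsz bc)) (esym E).
  have colid l : LS_column K C b c l = LS_column K C a c l - LS_column K C a b l.
    rewrite /LS_column S1 S2 E.
    have [->|la] := eqVneq l a.
      by rewrite ?eqxx (negbTE nab) (negbTE nac); ring.
    have [->|lb] := eqVneq l b.
      by rewrite ?eqxx (negbTE nbc); ring.
    by rewrite !subr0.
  have col_a : LS_column K C b c a = 0.
    by rewrite /LS_column (negbTE nab) (negbTE nac) subr0.
  have g1a : g1 a = 0 by rewrite H1 col_a mulr0.
  apply: (Hmin g1 F1).
  exists 2%N, (fun n : 'I_2 => if n == ord0 then g2 else g3),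
    (fun n : 'I_2 => if n == ord0 then s1 * s2 else - (s1 * s3)).
  split.
    move=> n; case: ifP => _; split => // Eg.
      have := col_nz K Hsz nac ac; rewrite H2' Eg g1a mulr0 eqxx //.
    have := col_nz K Hsz nab ab; rewrite H3' Eg g1a mulr0 eqxx //.
  move=> l; rewrite !big_ord_recl big_ord0 /=.
  rewrite H1 colid H2' H3'; ring.
- move=> Hno f [i [j [lij aij ->]]] [m [g [c [Hg Hsum]]]].
  have nij : i != j by rewrite neq_ltn lij.
  have [k [Pk Sk]] := pick_some (adj_card Hsz aij).1.
  have := Hsum i; rewrite {1}/LS_column eqxx (negbTE nij) Pk /= subr0 => H.
  have := congr1 (mcoeff U_(k)) H; rewrite mcoeffXU eqxx raddf_sum /=.
  rewrite big1 ?(oner_eq0 _) => [/eqP|n _]; first by rewrite oner_eq0.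
  have [[a [b [lab aab En]]] nf] := Hg n.
  apply/eqP; apply: contraT => Hnz; exfalso; apply: Hno.
  rewrite En /LS_column mulrBr mcoeffB in Hnz.
  have [ia|nia] := eqVneq i a.
    subst a; have nib : i != b by rewrite neq_ltn lab.
    rewrite eqxx (negbTE nib) in Hnz.
    rewrite mulr0 mcoeff0 subr0 in Hnz.
    have Pb := coefX_nz Hnz.
    have Sb : C b :\: C i = [set k].
      exact: set1_of (adj_card Hsz aab).1 (pick_in Pb).
    have njb : j != b.
      by apply/eqP => Ejb; subst b; apply: nf; rewrite En.
    apply: (@strong_of s r C Hsz Cinj i j b) => //.
    by rewrite Sk Sb.
  rewrite (negbTE nia) mulr0 mcoeff0 sub0r oppr_eq0 in Hnz.
  have [ib|nib] := eqVneq i b; last by rewrite (negbTE nib) mulr0 mcoeff0 eqxx in Hnz.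
  subst b; rewrite eqxx in Hnz.
  have Pa := coefX_nz Hnz.
  have Sa : C a :\: C i = [set k].
    exact: set1_of (adj_card Hsz aab).2 (pick_in Pa).
  have nja : j != a by rewrite neq_ltn (ltn_trans lab lij) orbT.
  apply: (@strong_of s r C Hsz Cinj i j a) => //; last by rewrite Sk Sa.
  exact: adj_sym.
Qed.
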